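(* Consider the SDP pair and ADMM iteration of the context, with $\mathcal A$ surjective and nonempty KKT set, and suppose the ADMM iterates converge to a KKT point $(X_\star,y_\star,S_\star)$ with $\operatorname{rank}X_\star+\operatorname{rank}S_\star=n$. Then there exists $\bar k_{\mathrm{ID}}\in\mathbb N$ such that for every integer $k\ge\bar k_{\mathrm{ID}}$, $\operatorname{rank}X^{(k)}=\operatorname{rank}X_\star$ and $\operatorname{rank}S^{(k)}=\operatorname{rank}S_\star$.
   Context: $\mathbb S^n$: real symmetric matrices; $\Pi_{\mathbb S^n_+}$ the Frobenius projection onto the PSD cone. SDP pair: minimize $\langle C,X\rangle$ s.t. $\mathcal AX=b$, $X\succeq0$; maximize $b^\top y$ s.t. $\mathcal A^*y+S=C$, $S\succeq0$, where $C,A_1,\dots,A_m\in\mathbb S^n$, $\mathcal AX=(\operatorname{tr}(A_iX))_i$, $\mathcal A^*y=\sum y_iA_i$. KKT point: $\mathcal AX=b$, $\mathcal A^*y+S=C$, $\operatorname{tr}(XS)=0$, $X,S\succeq0$. With $\sigma>0$ and $\mathcal P=\mathcal A^*(\mathcal A\mathcal A^* )^{-1}\mathcal A$, ADMM (one-step form) iterates $Z^{(k+1)}=\mathcal P(-2\Pi_{\mathbb S^n_+}(Z^{(k)})+Z^{(k)})+\Pi_{\mathbb S^n_+}(Z^{(k)})+\mathcal A^*(\mathcal A\mathcal A^* )^{-1}b+\sigma\mathcal PC-\sigma C$ and $X^{(k)}=\Pi_{\mathbb S^n_+}(Z^{(k)})$, $S^{(k)}=\sigma^{-1}\Pi_{\mathbb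 S^n_+}(-Z^{(k)})$; convergence of the iterates to $(X_\star,y_\star,S_\star)$ means $Z^{(k)}\to X_\star-\sigma S_\star$ (equivalently, the classical three-step ADMM iterates converge to that KKT point). *)

(* Defs.v *)
From HB Require Import structures.
From mathcomp Require Import all_boot all_order all_algebra.
From mathcomp Require Import all_classical all_reals topology normedtype sequences.
Import numFieldTopology.Exports numFieldNormedType.Exports.
Set Implicit Arguments. Unset Strict Implicit. Unset Printing Implicit Defensive.
Import Order.TTheory GRing.Theory Num.Theory.
Local Open Scope ring_scope.
Local Open Scope classical_set_scope.

Section SDP.
Variables (R : realType) (n m : nat).

Definition sym_mx (X : 'M[R]_n) : Prop := X^T = X.

Definition psd_mx (X : 'M[R]_n) : Prop :=
  sym_mx X /\ forall v : 'cV[R]_n, 0 <= (v^T *m X *m v) 0 0.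

Definition frob_ip (A B : 'M[R]_n) : R := \tr (A^T *m B).
Definition frob_sq (A : 'M[R]_n) : R := frob_ip A A.

Definition is_psd_proj (Z Z' : 'M[R]_n) : Prop :=
  psd_mx Z' /\ forall Y, psd_mx Y -> frob_sq (Z - Z') <= frob_sq (Z - Y).

Definition psd_proj (Z : 'M[R]_n) : 'M[R]_n := xget 0 [set Z' | is_psd_proj Z Z'].

Variable A : 'I_m -> 'M[R]_n.

Definition calA (X : 'M[R]_n) : 'cV[R]_m := \col_(i < m) \tr (A i *m X).
Definition calAadj (y : 'cV[R]_m) : 'M[R]_n := \sum_i y i 0 *: A i.
(* matrix of calA calA-adjoint : (i,j) |-> tr(A_i A_j) *)
Definition gramA : 'M[R]_m := \matrix_(i, j) \tr (A i *m A j).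
Definition pinvA (c : 'cV[R]_m) : 'M[R]_n := calAadj (invmx gramA *m c).
Definition projA (Z : 'M[R]_n) : 'M[R]_n := pinvA (calA Z).

Definition KKT (C : 'M[R]_n) (b : 'cV[R]_m)
  (X : 'M[R]_n) (y : 'cV[R]_m) (S : 'M[R]_n) : Prop :=
  [/\ calA X = b, calAadj y + S = C, \tr (X *m S) = 0, psd_mx X & psd_mx S].

Definition admm_step (C : 'M[R]_n) (b : 'cV[R]_m) (sigma : R) (Z : 'M[R]_n)
  : 'M[R]_n :=
  projA (- (2%:R *: psd_proj Z) + Z) + psd_proj Z + pinvA b
  + sigma *: projA C - sigma *: C.

End SDP.

(* Main.v *)
Require Import Defs.
From HB Require Import structures.
From mathcomp Require Import all_boot all_order all_algebra.
From mathcomp Require Import all_classical all_reals topology normedtype sequences.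
From mathcomp Require Import derive.
From mathcomp Require Import ring lra.
Import numFieldTopology.Exports numFieldNormedType.Exports.
Import Order.TTheory GRing.Theory Num.Theory.
Local Open Scope ring_scope.
Local Open Scope classical_set_scope.

Lemma frob_ipDl {R : realType} {n : nat} (A B C : 'M[R]_n) :
  frob_ip (A + B) C = frob_ip A C + frob_ip B C.
Proof. by rewrite /frob_ip linearD /= mulmxDl mxtraceD. Qed.
Lemma frob_ipDr {R : realType} {n : nat} (A B C : 'M[R]_n) :
  frob_ip C (A + B) = frob_ip C A + frob_ip C B.
Proof. by rewrite /frob_ip mulmxDr mxtraceD. Qed.
Lemma frob_ipZl {R : realType} {n : nat} (a : R) (A C : 'M[R]_n) :
  frob_ip (a *: A) C = a * frob_ip A C.
Proof. by rewrite /frob_ip linearZ /= -scalemxAl mxtraceZ. Qed.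
Lemma frob_ipZr {R : realType} {n : nat} (a : R) (A C : 'M[R]_n) :
  frob_ip C (a *: A) = a * frob_ip C A.
Proof. by rewrite /frob_ip -scalemxAr mxtraceZ. Qed.
Lemma frob_ipNl {R : realType} {n : nat} (A C : 'M[R]_n) :
  frob_ip (- A) C = - frob_ip A C.
Proof. by rewrite -scaleN1r frob_ipZl mulN1r. Qed.
Lemma frob_ipNr {R : realType} {n : nat} (A C : 'M[R]_n) :
  frob_ip C (- A) = - frob_ip C A.
Proof. by rewrite -scaleN1r frob_ipZr mulN1r. Qed.
Lemma frob_ipBl {R : realType} {n : nat} (A B C : 'M[R]_n) :
  frob_ip (A - B) C = frob_ip A C - frob_ip B C.
Proof. by rewrite frob_ipDl frob_ipNl. Qed.
Lemma frob_ipBr {R : realType} {n : nat} (A B C : 'M[R]_n) :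
  frob_ip C (A - B) = frob_ip C A - frob_ip C B.
Proof. by rewrite frob_ipDr frob_ipNr. Qed.
Lemma frob_ipC {R : realType} {n : nat} (A B : 'M[R]_n) : frob_ip A B = frob_ip B A.
Proof. by rewrite /frob_ip -mxtrace_tr trmx_mul trmxK. Qed.
Lemma frob_ip0r {R : realType} {n : nat} (A : 'M[R]_n) : frob_ip A 0 = 0.
Proof. by rewrite /frob_ip mulmx0 linear0. Qed.
Lemma frob_ip0l {R : realType} {n : nat} (A : 'M[R]_n) : frob_ip 0 A = 0.
Proof. by rewrite frob_ipC frob_ip0r. Qed.

Lemma frob_ipE {R : realType} {n : nat} (A B : 'M[R]_n) :
  frob_ip A B = \sum_i \sum_j A i j * B i j.
Proof.
rewrite /frob_ip /mxtrace exchange_big /=; apply: eq_bigr => i _.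
by rewrite mxE; apply: eq_bigr => j _; rewrite mxE.
Qed.

Lemma sum_term_le {R : realType} {I : finType} (F : I -> R) i :
  (forall k, 0 <= F k) -> F i <= \sum_k F k.
Proof.
move=> F0; rewrite (bigD1 i) //= lerDl; exact: sumr_ge0.
Qed.

Lemma frob_sq_entry {R : realType} {n : nat} (A : 'M[R]_n) i j :
  A i j ^+ 2 <= frob_sq A.
Proof.
rewrite /frob_sq frob_ipE.
have h1 : A i j ^+ 2 <= \sum_j0 A i j0 * A i j0.
  by rewrite expr2; apply: (@sum_term_le _ _ (fun l => A i l * A i l)) => l; rewrite -expr2 sqr_ge0.
apply: le_trans h1 _.
apply: (@sum_term_le _ _ (fun k => \sum_j0 A k j0 * A k j0)) => k.
by apply: sumr_ge0 => l _; rewrite -expr2 sqr_ge0.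
Qed.

Lemma frob_sq_ge0 {R : realType} {n : nat} (A : 'M[R]_n) : 0 <= frob_sq A.
Proof.
rewrite /frob_sq frob_ipE; apply: sumr_ge0 => i _; apply: sumr_ge0 => j _.
by rewrite -expr2 sqr_ge0.
Qed.

Lemma frob_sq_eq0 {R : realType} {n : nat} (A : 'M[R]_n) : frob_sq A <= 0 -> A = 0.
Proof.
move=> H; apply/matrixP => i j; rewrite mxE.
have := le_trans (frob_sq_entry A i j) H.
by rewrite -[_ ^+ 2 <= 0]/(_) => h; apply/eqP; rewrite -sqrf_eq0 eq_le h sqr_ge0.
Qed.

Lemma frob_sqN {R : realType} {n : nat} (A : 'M[R]_n) : frob_sq (- A) = frob_sq A.
Proof. by rewrite /frob_sq frob_ipNl frob_ipNr opprK. Qed.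
Definition bf {R : realType} {n : nat} (M : 'M[R]_n) (v w : 'cV[R]_n) : R :=
  (v^T *m M *m w) 0 0.

Lemma bfDl {R : realType} {n : nat} (M : 'M[R]_n) u v w :
  bf M (u + v) w = bf M u w + bf M v w.
Proof. by rewrite /bf linearD /= !mulmxDl mxE. Qed.
Lemma bfDr {R : realType} {n : nat} (M : 'M[R]_n) u v w :
  bf M w (u + v) = bf M w u + bf M w v.
Proof. by rewrite /bf !mulmxDr mxE. Qed.
Lemma bfZl {R : realType} {n : nat} (M : 'M[R]_n) (a : R) u w :
  bf M (a *: u) w = a * bf M u w.
Proof. by rewrite /bf linearZ /= -!scalemxAl mxE. Qed.
Lemma bfZr {R : realType} {n : nat} (M : 'M[R]_n) (a : R) u w :
  bf M w (a *: u) = a * bf M w u.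
Proof. by rewrite /bf -!scalemxAr mxE. Qed.
Lemma bf_tr {R : realType} {n : nat} (M : 'M[R]_n) u w :
  bf M u w = bf M^T w u.
Proof.
rewrite /bf -[in LHS](trmxK (u^T *m M *m w)) mxE.
by rewrite !trmx_mul trmxK mulmxA.
Qed.
Lemma bf_sym {R : realType} {n : nat} (M : 'M[R]_n) u w :
  sym_mx M -> bf M u w = bf M w u.
Proof. by move=> sM; rewrite bf_tr sM. Qed.

Lemma bf_expand {R : realType} {n : nat} (M : 'M[R]_n) v w (t : R) :
  sym_mx M ->
  bf M (v + t *: w) (v + t *: w) = bf M v v + 2 * t * bf M v w + t ^+ 2 * bf M w w.
Proof.
move=> sM; rewrite !bfDl !bfDr !bfZl !bfZr (bf_sym _ w v sM).
by rewrite expr2; ring.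
Qed.

Lemma psd_bf {R : realType} {n : nat} (M : 'M[R]_n) v : psd_mx M -> 0 <= bf M v v.
Proof. by case=> _; apply. Qed.

Lemma bf_delta {R : realType} {n : nat} (M : 'M[R]_n) v i :
  bf M (delta_mx i 0) v = (M *m v) i 0.
Proof.
rewrite /bf trmx_delta -mulmxA -rowE mxE.
by [].
Qed.

Lemma psd_null {R : realType} {n : nat} (P : 'M[R]_n) v :
  psd_mx P -> bf P v v = 0 -> P *m v = 0.
Proof.
move=> Pp v0; apply/matrixP => i j; rewrite (ord1 j) [RHS]mxE.
set w : 'cV[R]_n := delta_mx i 0.
have := bf_delta P v i; rewrite -/w => <-.
set a := bf P w v; set b := bf P w w.
have b0 : 0 <= b by apply: psd_bf.
set e := (b + 1)^-1.
have e0 : 0 < e by rewrite invr_gt0; lra.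
have eb : e * b <= 1.
  by rewrite /e ler_pdivrMl; lra.
have := @psd_bf _ _ P (v + (- a * e) *: w) Pp.
rewrite bf_expand; last by case: Pp.
rewrite v0 (bf_sym _ v w); last by case: Pp.
rewrite -/a -/b => H.
have : a * a * e * (2 - e * b) <= 0 by nra.
move=> H2.
have : a * a <= 0.
  have h3 : 0 < e * (2 - e * b) by apply: mulr_gt0 => //; lra.
  by rewrite -(pmulr_lle0 _ h3) mulrA.
move=> h4; have : a ^+ 2 == 0 by rewrite eq_le sqr_ge0 andbT expr2.
by rewrite sqrf_eq0 => /eqP.
Qed.
Lemma bfMD {R : realType} {n : nat} (A B : 'M[R]_n) v w :
  bf (A + B) v w = bf A v w + bf B v w.
Proof. by rewrite /bf mulmxDr mulmxDl mxE. Qed.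
Lemma bfMZ {R : realType} {n : nat} (a : R) (A : 'M[R]_n) v w :
  bf (a *: A) v w = a * bf A v w.
Proof. by rewrite /bf -scalemxAr -scalemxAl mxE. Qed.
Lemma bfMN {R : realType} {n : nat} (A : 'M[R]_n) v w :
  bf (- A) v w = - bf A v w.
Proof. by rewrite -scaleN1r bfMZ mulN1r. Qed.

Lemma psd_add {R : realType} {n : nat} {A B : 'M[R]_n} :
  psd_mx A -> psd_mx B -> psd_mx (A + B).
Proof.
move=> [sA pA] [sB pB]; split; first by rewrite /sym_mx linearD /= sA sB.
move=> v; have := pA v; have := pB v; have := bfMD A B v v; rewrite /bf => ->; lra.
Qed.

Lemma psd_scale {R : realType} {n : nat} {a : R} {A : 'M[R]_n} :
  0 <= a -> psd_mx A -> psd_mx (a *: A).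
Proof.
move=> a0 [sA pA]; split; first by rewrite /sym_mx linearZ /= sA.
move=> v; have := bfMZ a A v v; rewrite /bf => ->; apply: mulr_ge0 => //; apply: pA.
Qed.

Lemma psd0 {R : realType} {n : nat} : psd_mx (0 : 'M[R]_n).
Proof. split; first by rewrite /sym_mx trmx0.
by move=> v; rewrite mulmx0 mul0mx mxE. Qed.

Lemma mx11_mulE {R : realType} (A B : 'M[R]_1) : (A *m B) 0 0 = A 0 0 * B 0 0.
Proof. by rewrite mxE big_ord1. Qed.

Lemma bf_rank1 {R : realType} {n : nat} (u v : 'cV[R]_n) :
  bf (u *m u^T) v v = ((v^T *m u) 0 0) ^+ 2.
Proof.
rewrite /bf mulmxA -(mulmxA (v^T *m u)) mx11_mulE expr2; congr (_ * _).
by rewrite -[in LHS](trmxK v) -trmx_mul mxE.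
Qed.

Lemma sym_rank1 {R : realType} {n : nat} (u : 'cV[R]_n) : sym_mx (u *m u^T).
Proof. by rewrite /sym_mx trmx_mul trmxK. Qed.

Lemma psd_rank1 {R : realType} {n : nat} (u : 'cV[R]_n) : psd_mx (u *m u^T).
Proof.
split; first exact: sym_rank1.
move=> v; have := bf_rank1 u v; rewrite /bf => ->; exact: sqr_ge0.
Qed.

Lemma mxtrace11 {R : realType} (A : 'M[R]_1) : \tr A = A 0 0.
Proof. by rewrite /mxtrace big_ord1. Qed.

Lemma frob_ip_rank1 {R : realType} {n : nat} (M : 'M[R]_n) (u : 'cV[R]_n) :
  frob_ip M (u *m u^T) = bf M u u.
Proof.
rewrite /frob_ip mulmxA mxtrace_mulC mxtrace11 mulmxA.
by rewrite [RHS]bf_tr.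
Qed.

Lemma psd_schur {R : realType} {n : nat} (Y : 'M[R]_n) k :
  psd_mx Y -> 0 < Y k k ->
  psd_mx (Y - (Y k k)^-1 *: (col k Y *m (col k Y)^T)).
Proof.
move=> Yp d0; have sY : sym_mx Y by case: Yp.
split.
  by rewrite /sym_mx linearB /= linearZ /= sym_rank1 sY.
move=> w; change (0 <= bf (Y - (Y k k)^-1 *: (col k Y *m (col k Y)^T)) w w).
rewrite bfMD bfMN bfMZ bf_rank1.
set e : 'cV[R]_n := delta_mx k 0.
have hc : (w^T *m col k Y) 0 0 = bf Y w e by rewrite colE /bf mulmxA.
have hd : bf Y e e = Y k k by rewrite bf_delta -colE mxE.
rewrite hc; set c := bf Y w e; set d := Y k k.
have := @psd_bf _ _ Y (w + (- c / d) *: e) Yp.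
rewrite bf_expand // -/c hd -/d => H.
have -> : bf Y w w = bf Y w w + 2 * (- c / d) * c + (- c / d) ^+ 2 * d + c ^+ 2 / d.
  by field; rewrite gt_eqF.
have hcd : 0 <= c ^+ 2 / d by apply: divr_ge0; [apply: sqr_ge0 | apply: ltW].
have -> : d^-1 * c ^+ 2 = c ^+ 2 / d by rewrite mulrC.
lra.
Qed.
Definition Phi {R : realType} {n : nat} (Y : 'M[R]_n) : Prop :=
  forall P, psd_mx P -> 0 <= frob_ip P Y /\ (frob_ip P Y = 0 -> P *m Y = 0).

Lemma Phi_add {R : realType} {n : nat} (Y : 'M[R]_n) (c : R) (u : 'cV[R]_n) :
  Phi Y -> 0 <= c -> Phi (Y + c *: (u *m u^T)).
Proof.
move=> PY c0 P Pp; have [a0 a00] := PY P Pp.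
have b0 := @psd_bf _ _ P u Pp.
rewrite frob_ipDr frob_ipZr frob_ip_rank1.
have cb0 : 0 <= c * bf P u u by apply: mulr_ge0.
split; first lra.
move=> H; have ha : frob_ip P Y = 0 by lra.
have hb : c * bf P u u = 0 by lra.
rewrite mulmxDr (a00 ha) add0r -scalemxAr mulmxA.
move: hb => /eqP; rewrite mulf_eq0 => /orP[/eqP -> | /eqP hb]; first by rewrite scale0r.
by rewrite (psd_null P u Pp hb) mul0mx scaler0.
Qed.

Lemma Phi_all {R : realType} {n : nat} (Y : 'M[R]_n) : psd_mx Y -> Phi Y.
Proof.
suff S : forall k (Y : 'M[R]_n), psd_mx Y ->
    (forall i j : 'I_n, (k <= j)%N -> Y i j = 0) -> Phi Y.
  by move=> Yp; apply: (S n) => // i j; rewrite leqNgt ltn_ord.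
elim=> [|k IH] {}Y Yp H.
  have -> : Y = 0 by apply/matrixP => i j; rewrite mxE; apply: H.
  by move=> P _; rewrite frob_ip0r mulmx0; split.
have sY : sym_mx Y by case: Yp.
case: (ltnP k n) => hk; last first.
  by apply: IH => // i j kj; move: (ltn_ord j); rewrite ltnNge (leq_trans hk kj).
set kk : 'I_n := Ordinal hk.
have dge0 : 0 <= Y kk kk.
  have := @psd_bf _ _ Y (delta_mx kk 0) Yp; by rewrite bf_delta -colE mxE.
have Ykj : forall i, Y kk i = Y i kk.
  by move=> i; rewrite -{1}sY mxE.
case: (eqVneq (Y kk kk) 0) => [d0 | dn0].
  have hz : col kk Y = 0.
    have h1 := psd_null Y (delta_mx kk 0) Yp; rewrite -colE in h1.
    by apply: h1; rewrite bf_delta -colE mxE.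
  apply: IH => // i j; rewrite leq_eqVlt => /orP[/eqP kj | kj]; last by apply: H.
  have -> : j = kk by apply: val_inj.
  by move/matrixP: hz => /(_ i 0); rewrite !mxE.
have d0 : 0 < Y kk kk by rewrite lt_def dn0.
set u := col kk Y.
have -> : Y = (Y - (Y kk kk)^-1 *: (u *m u^T)) + (Y kk kk)^-1 *: (u *m u^T).
  by rewrite subrK.
apply: Phi_add; last by rewrite invr_ge0 ltW.
apply: IH; first exact: psd_schur.
move=> i j; rewrite !mxE big_ord1 !mxE.
rewrite leq_eqVlt => /orP[/eqP kj | kj].
  have -> : j = kk by apply: val_inj.
  by field; rewrite gt_eqF.
by rewrite (H i j kj) -(Ykj j) (H kk j kj) !mulr0 subr0.
Qed.

Lemma psd_ip_ge0 {R : realType} {n : nat} {P Y : 'M[R]_n} :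
  psd_mx P -> psd_mx Y -> 0 <= frob_ip P Y.
Proof. by move=> Pp Yp; have [] := Phi_all Y Yp P Pp. Qed.

Lemma psd_ip_eq0 {R : realType} {n : nat} {P Y : 'M[R]_n} :
  psd_mx P -> psd_mx Y -> frob_ip P Y = 0 -> P *m Y = 0.
Proof. by move=> Pp Yp; have [] := Phi_all Y Yp P Pp. Qed.
Definition VI {R : realType} {n : nat} (Z P : 'M[R]_n) : Prop :=
  psd_mx P /\ forall Y, psd_mx Y -> frob_ip (Z - P) (Y - P) <= 0.

Lemma frob_sqB {R : realType} {n : nat} (D E : 'M[R]_n) (t : R) :
  frob_sq (D - t *: E) = frob_sq D - 2 * t * frob_ip D E + t ^+ 2 * frob_sq E.
Proof.
rewrite /frob_sq frob_ipBl !frob_ipBr !frob_ipZl !frob_ipZr (frob_ipC E D).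
by rewrite expr2; ring.
Qed.

Lemma proj_VI {R : realType} {n : nat} {Z P : 'M[R]_n} :
  is_psd_proj Z P -> VI Z P.
Proof.
move=> [Pp Pmin]; split => // Y Yp.
set a := frob_ip (Z - P) (Y - P); set c := frob_sq (Y - P).
have c0 : 0 <= c := frob_sq_ge0 _.
rewrite leNgt; apply/negP => a0.
set t := a / (a + c).
have ac0 : 0 < a + c by lra.
have t0 : 0 < t by apply: divr_gt0.
have t1 : t <= 1 by rewrite /t ler_pdivrMr // mul1r; lra.
have tac : t * (a + c) = a by rewrite /t mulfVK // gt_eqF.
have hY : psd_mx (P + t *: (Y - P)).
  have -> : P + t *: (Y - P) = (1 - t) *: P + t *: Y.
    by apply/matrixP => i j; rewrite !mxE; ring.
  by apply: psd_add; apply: psd_scale => //; lra.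
have := Pmin _ hY.
have -> : Z - (P + t *: (Y - P)) = (Z - P) - t *: (Y - P).
  by apply/matrixP => i j; rewrite !mxE; ring.
rewrite frob_sqB -/a -/c => H.
have H2 : 2 * t * a <= t ^+ 2 * c by lra.
rewrite expr2 in H2.
nra.
Qed.

Lemma VI_nonexp {R : realType} {n : nat} {Z1 P1 Z2 P2 : 'M[R]_n} :
  VI Z1 P1 -> VI Z2 P2 -> frob_sq (P1 - P2) <= frob_sq (Z1 - Z2).
Proof.
move=> [P1p H1] [P2p H2].
have h1 := H1 _ P2p; have h2 := H2 _ P1p.
have h3 := frob_sq_ge0 ((Z1 - Z2) - (P1 - P2)).
move: h1 h2 h3; rewrite /frob_sq !frob_ipBl !frob_ipBr ?frob_ipBl ?frob_ipBr.
have e1 := frob_ipC Z1 Z2; have e2 := frob_ipC Z1 P1; have e3 := frob_ipC Z1 P2.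
have e4 := frob_ipC Z2 P1; have e5 := frob_ipC Z2 P2; have e6 := frob_ipC P1 P2.
lra.
Qed.

Lemma VI_unique {R : realType} {n : nat} {Z P1 P2 : 'M[R]_n} :
  VI Z P1 -> VI Z P2 -> P1 = P2.
Proof.
move=> h1 h2; have := VI_nonexp h1 h2; rewrite subrr /frob_sq frob_ip0r.
by move/frob_sq_eq0 => /eqP; rewrite subr_eq0 => /eqP.
Qed.

Lemma VI_moreau {R : realType} {n : nat} {Z P : 'M[R]_n} :
  sym_mx Z -> VI Z P -> VI (- Z) (P - Z) /\ frob_ip P (P - Z) = 0.
Proof.
move=> sZ [Pp HP]; have sP : sym_mx P by case: Pp.
have hA := HP 0 psd0; have hB := HP (P + P) (psd_add Pp Pp).
rewrite sub0r frob_ipNr in hA; rewrite addrK in hB.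
have e0 : frob_ip (Z - P) P = 0 by lra.
have hPZ : frob_ip P (P - Z) = 0.
  move: e0; rewrite frob_ipBr frob_ipBl (frob_ipC Z P); lra.
split => //; split.
  split; first by rewrite /sym_mx linearB /= sP sZ.
  move=> v; have := HP _ (psd_add Pp (psd_rank1 v)).
  rewrite (addrC P) addrK frob_ip_rank1 => H.
  change (0 <= bf (P - Z) v v); move: H.
  by rewrite !bfMD !bfMN; lra.
move=> Y Yp.
have -> : - Z - (P - Z) = - P by apply/matrixP => i j; rewrite !mxE; ring.
rewrite frob_ipNl frob_ipBr hPZ.
have := psd_ip_ge0 Pp Yp; lra.
Qed.
Lemma entry_bound {R : realType} {a b : nat} (M : 'M[R]_(a, b)) :
  exists c : R, 0 <= c /\ forall i j, `|M i j| <= c.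
Proof.
exists (\sum_i \sum_j `|M i j|); split.
  by apply: sumr_ge0 => i _; apply: sumr_ge0.
move=> i j; apply: le_trans (@sum_term_le _ _ (fun k => \sum_j `|M k j|) i _); last first.
  by move=> k; apply: sumr_ge0.
by apply: (@sum_term_le _ _ (fun l => `|M i l|)).
Qed.

Lemma mul_entry_bound {R : realType} {a b c : nat} (A : 'M[R]_(a, b))
  (B : 'M[R]_(b, c)) (al be : R) :
  0 <= al -> (forall i j, `|A i j| <= al) -> (forall i j, `|B i j| <= be) ->
  forall i j, `|(A *m B) i j| <= b%:R * (al * be).
Proof.
move=> al0 hA hB i j; rewrite mxE; apply: le_trans (ler_norm_sum _ _ _) _.
have -> : b%:R * (al * be) = \sum_(k < b) (al * be).
  by rewrite sumr_const card_ord mulr_natl.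
apply: ler_sum => k _; rewrite normrM; apply: ler_pM => //.
Qed.

Lemma unit_near_id {R : realType} {r : nat} (W : 'M[R]_r) (eta : R) :
  (forall i j, `|(W - 1%:M) i j| <= eta) -> r%:R * eta < 1 -> W \in unitmx.
Proof.
move=> hW hr; case: (boolP (W \in unitmx)) => // hU; exfalso.
have : \det W == 0 by move: hU; rewrite unitmxE unitfE negbK.
move=> /det0P [u u0 uW].
have huW : u *m (W - 1%:M) = - u by rewrite mulmxBr uW mulmx1 sub0r.
have [k uk] : exists k, u 0 k != 0.
  case: (pickP (fun k => u 0 k != 0)) => [k uk | h]; first by exists k.
  move: u0; have -> : u = 0 by apply/rowP => k; rewrite mxE; move: (h k) => /negbFE/eqP.
  by rewrite eqxx.
set s := \sum_i `|u 0 i|.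
have s0 : 0 < s.
  apply: lt_le_trans (@sum_term_le _ _ (fun i => `|u 0 i|) k _) => //.
  by rewrite normr_gt0.
have eta0 : 0 <= eta by apply: le_trans (hW k k); apply: normr_ge0.
have hi : forall i, `|u 0 i| <= eta * s.
  move=> i; have -> : `|u 0 i| = `|(- u) 0 i| by rewrite mxE normrN.
  rewrite -huW mxE.
  apply: le_trans (ler_norm_sum _ _ _) _.
  rewrite /s mulr_sumr; apply: ler_sum => l _; rewrite normrM mulrC.
  by apply: ler_wpM2r => //.
have : s <= r%:R * (eta * s).
  rewrite /s -[X in _ <= _ * (_ * X)]/s.
  have -> : r%:R * (eta * s) = \sum_(i < r) (eta * s).
    by rewrite sumr_const card_ord mulr_natl.
  by apply: ler_sum => i _; apply: hi.
nra.
Qed.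
Lemma small_entry {R : realType} {n : nat} (D : 'M[R]_n) (d : R) :
  0 < d -> frob_sq D < d * d -> forall k l, `|D k l| <= d.
Proof.
move=> d0 hD k l; have h := frob_sq_entry D k l.
rewrite leNgt; apply/negP => hlt.
have : d ^+ 2 < `|D k l| ^+ 2 by rewrite ltrXn2r // ltW.
rewrite real_normK ?num_real // => h2.
rewrite expr2 in h2; lra.
Qed.

Lemma rank_lsc {R : realType} {n : nat} (X : 'M[R]_n) :
  exists2 e : R, 0 < e & forall P, frob_sq (P - X) < e -> (\rank X <= \rank P)%N.
Proof.
set r := \rank X.
have rn : (r <= n)%N by apply: rank_leq_row.
set CE := col_ebase X; set RE := row_ebase X.
have uCE : CE \in unitmx by apply: col_ebase_unit.
have uRE : RE \in unitmx by apply: row_ebase_unit.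
pose M : 'M[R]_(r, n) := (pid_mx r : 'M[R]_(r, n)) *m invmx CE.
pose N : 'M[R]_(n, r) := invmx RE *m (pid_mx r : 'M[R]_(n, r)).
have hMXN : M *m X *m N = 1%:M.
  rewrite -[in LHS](mulmx_ebase X) -/r -/CE -/RE /M /N.
  rewrite -!mulmxA (mulKmx uCE) !mulmxA (mulmxK uRE).
  by rewrite pid_mx_id // pid_mx_id // pid_mx_1.
have [cM [cM0 hM]] := entry_bound M.
have [cN [cN0 hN]] := entry_bound N.
set K := r%:R * (n%:R * (n%:R * cM * cN)).
have K0 : 0 <= K by rewrite /K; apply: mulr_ge0 => //; apply: mulr_ge0 => //;
  do 2 apply: mulr_ge0 => //.
set d := (K + 1)^-1.
have d0 : 0 < d by rewrite invr_gt0; lra.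
have Kd : K * d < 1 by rewrite /d ltr_pdivrMr; lra.
exists (d * d); first by apply: mulr_gt0.
move=> P hP.
have hD := @small_entry _ _ (P - X) d d0 hP.
have hMD := @mul_entry_bound _ _ _ _ M (P - X) cM d cM0 hM hD.
have hMDN := @mul_entry_bound _ _ _ _ (M *m (P - X)) N _ cN (mulr_ge0 (ler0n _ n) (mulr_ge0 cM0 (ltW d0))) hMD hN.
have hW : M *m P *m N - 1%:M = M *m (P - X) *m N.
  by rewrite -hMXN mulmxBr mulmxBl.
have uW : M *m P *m N \in unitmx.
  apply: (@unit_near_id _ _ _ (n%:R * (n%:R * (cM * d) * cN))).
    by move=> i j; rewrite hW; apply: hMDN.
  apply: le_lt_trans Kd; rewrite /K le_eqVlt; apply/orP; left; apply/eqP; ring.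
have := mxrank_unit uW.
move=> hr; rewrite -[X in (X <= _)%N]hr.
apply: leq_trans (mxrankM_maxl _ _) _.
exact: mxrankM_maxr.
Qed.
Lemma cont_sum {R : realType} {N : nat} {I : finType}
  (F : I -> 'rV[R]_N -> R) :
  (forall i, continuous (F i)) -> continuous (fun v => \sum_i F i v).
Proof.
move=> hF.
suff H : forall s : seq I, continuous (fun v => \big[+%R/0]_(i <- s) F i v).
  exact: H.
elim=> [|a s IH].
  have -> : (fun v : 'rV[R]_N => \big[+%R/0]_(i <- [::]) F i v) = (fun=> 0).
    by apply: funext => v; rewrite big_nil.
  exact: cst_continuous.
have -> : (fun v => \big[+%R/0]_(i <- a :: s) F i v) =
          (F a + (fun v => \big[+%R/0]_(i <- s) F i v)).
  by apply: funext => v; rewrite big_cons.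
by move=> x; exact: (@continuousD _ _ _ (F a) _ x (hF a x) (IH x)).
Qed.

Lemma cont_mul {R : realType} {N : nat} (f g : 'rV[R]_N -> R) :
  continuous f -> continuous g -> continuous (fun v => f v * g v).
Proof. by move=> hf hg x; exact: (@continuousM _ _ f g x (hf x) (hg x)). Qed.

Lemma cont_sub {R : realType} {N : nat} (f g : 'rV[R]_N -> R) :
  continuous f -> continuous g -> continuous (fun v => f v - g v).
Proof. by move=> hf hg x; exact: (@continuousB _ _ _ f g x (hf x) (hg x)). Qed.

Lemma cont_entry {R : realType} {n : nat} (i j : 'I_n) :
  continuous (fun v : 'rV[R]_(n * n) => vec_mx v i j).
Proof.
have -> : (fun v : 'rV[R]_(n * n) => vec_mx v i j) =
          (fun v => v 0 (mxvec_index i j)).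
  by apply: funext => v; rewrite mxE.
exact: coord_continuous.
Qed.

Lemma cont_frob {R : realType} {n : nat} (Z : 'M[R]_n) :
  continuous (fun v : 'rV[R]_(n * n) => frob_sq (Z - vec_mx v)).
Proof.
have -> : (fun v : 'rV[R]_(n * n) => frob_sq (Z - vec_mx v)) =
  (fun v => \sum_i \sum_j (Z i j - vec_mx v i j) * (Z i j - vec_mx v i j)).
  by apply: funext => v; rewrite /frob_sq frob_ipE; apply: eq_bigr => i _;
    apply: eq_bigr => j _; rewrite !mxE.
apply: cont_sum => i; apply: cont_sum => j.
by apply: cont_mul; apply: cont_sub; (exact: cst_continuous || exact: cont_entry).
Qed.

Lemma cont_qf {R : realType} {n : nat} (w : 'cV[R]_n) :
  continuous (fun v : 'rV[R]_(n * n) => (w^T *m vec_mx v *m w) 0 0).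
Proof.
have -> : (fun v : 'rV[R]_(n * n) => (w^T *m vec_mx v *m w) 0 0) =
  (fun v => \sum_j (\sum_i w^T 0 i * vec_mx v i j) * w j 0).
  by apply: funext => v; rewrite mxE; apply: eq_bigr => j _; rewrite mxE.
apply: cont_sum => j; apply: cont_mul; last exact: cst_continuous.
apply: cont_sum => i; apply: cont_mul; first exact: cst_continuous.
exact: cont_entry.
Qed.
Lemma abs_le_sq {R : realType} (x : R) : `|x| <= 1 + x ^+ 2.
Proof.
rewrite -real_normK ?num_real //; have := normr_ge0 x; set y := `|x|; nra.
Qed.

Lemma proj_exists {R : realType} {n : nat} (Z : 'M[R]_n) :
  exists P, is_psd_proj Z P.
Proof.
pose g := fun v : 'rV[R]_(n * n) => frob_sq (Z - vec_mx v).
set s := frob_sq Z.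
pose S := \bigcap_(k in [set: 'I_n * 'I_n])
  [set v : 'rV[R]_(n * n) | vec_mx v k.2 k.1 - vec_mx v k.1 k.2 = 0].
pose Q := \bigcap_(w in [set: 'cV[R]_n])
  [set v : 'rV[R]_(n * n) | 0 <= (w^T *m vec_mx v *m w) 0 0].
pose G := [set v : 'rV[R]_(n * n) | g v <= s].
pose A := S `&` Q `&` G.
have Apsd : forall v, A v -> psd_mx (vec_mx v).
  move=> v [[Sv Qv] _]; split; last by move=> w; apply: Qv.
  apply/matrixP => i j; rewrite [LHS]mxE.
  by have := Sv (i, j) I => /= /eqP; rewrite subr_eq0 => /eqP.
have Ain : forall Y, psd_mx Y -> frob_sq (Z - Y) <= s -> A (mxvec Y).
  move=> Y [sY pY] hY; split; [split|].
  - move=> k _ /=; rewrite mxvecK; apply/eqP; rewrite subr_eq0; apply/eqP.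
    by rewrite -[in LHS]sY mxE.
  - by move=> w _ /=; rewrite mxvecK; apply: pY.
  - by rewrite /G /g /= mxvecK.
have cA : closed A.
  apply: closedI; [apply: closedI|].
  - apply: closed_bigI => k _.
    apply: (@preimage_closed _ _ (fun v : 'rV[R]_(n * n) => vec_mx v k.2 k.1 - vec_mx v k.1 k.2) [set x | x = 0]); last exact: closed_eq.
    by move=> x _; apply: cont_sub; apply: cont_entry.
  - apply: closed_bigI => w _.
    apply: (@preimage_closed _ _ (fun v : 'rV[R]_(n * n) => (w^T *m vec_mx v *m w) 0 0) [set x | 0 <= x]); last exact: closed_ge.
    by move=> x _; apply: cont_qf.
  - apply: (@preimage_closed _ _ g [set x | x <= s]); last exact: closed_le.
    by move=> x _; apply: cont_frob.
set c := 2 + 2 * s.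
have s0 : 0 <= s := frob_sq_ge0 Z.
have Abox : A `<=` [set v : 'rV[R]_(n * n) | forall k, `[- c, c]%classic (v 0 k)].
  move=> v Av k; case/mxvec_indexP: k => i j /=.
  rewrite in_itv /= -ler_norml.
  have -> : v 0 (mxvec_index i j) = vec_mx v i j by rewrite mxE.
  have h1 := frob_sq_entry Z i j.
  have h2 := le_trans (frob_sq_entry (Z - vec_mx v) i j) (proj2 Av).
  have e1 := abs_le_sq (Z i j).
  have e2 := abs_le_sq ((Z - vec_mx v) i j).
  have -> : vec_mx v i j = Z i j - (Z - vec_mx v) i j by rewrite !mxE; ring.
  apply: le_trans (ler_normB _ _) _; rewrite -/s in h1 h2; rewrite /c; lra.
have cpA : compact A.
  apply: (subclosed_compact cA _ Abox).
  apply: (@rV_compact _ _ (fun=> `[- c, c]%classic)) => _.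
  exact: segment_compact.
have A0 : A !=set0.
  exists (mxvec 0); apply: Ain; first exact: psd0.
  by rewrite subr0.
have [v Av vmin] := compact_EVT_min A0 cpA (continuous_subspaceT (cont_frob Z)).
rewrite inE in Av.
exists (vec_mx v); split; first exact: Apsd.
move=> Y Yp; case: (lerP (frob_sq (Z - Y)) s) => hY.
  have := vmin (mxvec Y); rewrite inE mxvecK; apply; exact: Ain.
by apply: ltW; apply: le_lt_trans hY; exact: (proj2 Av).
Qed.

Lemma psd_proj_spec {R : realType} {n : nat} (Z : 'M[R]_n) :
  is_psd_proj Z (psd_proj Z).
Proof. by rewrite /psd_proj; apply: xgetPex; apply: proj_exists. Qed.
Lemma mx_entry_le_norm {R : realType} {n : nat} (M : 'M[R]_n) i j : `|M i j| <= `|M|.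
Proof. rewrite [leRHS]/Num.norm /= mx_normrE. apply/bigmax_geP; right => /=; by exists (i, j). Qed.

Lemma frob_le_entries {R : realType} {n : nat} (D : 'M[R]_n) (a : R) :
  (forall i j, `|D i j| <= a) -> frob_sq D <= n%:R * (n%:R * (a * a)).
Proof.
move=> hD; rewrite /frob_sq frob_ipE.
have -> : n%:R * (n%:R * (a * a)) = \sum_(i < n) \sum_(j < n) (a * a).
  by rewrite sumr_const card_ord sumr_const card_ord !mulr_natl.
apply: ler_sum => i _; apply: ler_sum => j _.
apply: le_trans (ler_norm _) _; rewrite normrM.
by apply: ler_pM => //; apply: hD.
Qed.

Lemma cvg_frob {R : realType} {n : nat} (Z : nat -> 'M[R]_n) (Zs : 'M[R]_n) :
  Z @ \oo --> Zs ->
  forall e, 0 < e -> exists N, forall k, (N <= k)%N -> frob_sq (Z k - Zs) < e.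
Proof.
move=> hZ e e0.
set m : R := n%:R * n%:R.
have m0 : 0 <= m by apply: mulr_ge0.
set a := e / ((e + 1) * (m + 1)).
have den0 : 0 < (e + 1) * (m + 1) by apply: mulr_gt0; lra.
have a0 : 0 < a by apply: divr_gt0.
have ha : a * ((e + 1) * (m + 1)) = e by rewrite /a mulfVK // gt_eqF.
move/cvgrPdist_lt: hZ => /(_ a a0) [N _ HN].
exists N => k hk; have hk' : `|Zs - Z k| < a := HN k hk.
have hb : forall i j, `|(Z k - Zs) i j| <= a.
  move=> i j; apply: le_trans (mx_entry_le_norm _ i j) _.
  by rewrite distrC ltW.
apply: le_lt_trans (@frob_le_entries _ _ _ a hb) _.
rewrite mulrA -/m.
have h1 : a * (m + 1) < 1.
  have : a * (m + 1) * (e + 1) = e by rewrite -[RHS]ha; ring.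
  move=> h; nra.
have h2 : a * (m + 1) <= e.
  have : a * (m + 1) * (e + 1) = e by rewrite -[RHS]ha; ring.
  move=> h; nra.
nra.
Qed.

Lemma symE {R : realType} {n : nat} (M : 'M[R]_n) :
  sym_mx M <-> forall i j, M j i = M i j.
Proof.
split=> [h i j | h]; first by rewrite -{2}h mxE.
by apply/matrixP => i j; rewrite mxE h.
Qed.

Lemma symD {R : realType} {n : nat} (M N : 'M[R]_n) :
  sym_mx M -> sym_mx N -> sym_mx (M + N).
Proof. by move=> /symE hM /symE hN; apply/symE => i j; rewrite !mxE hM hN. Qed.
Lemma symN {R : realType} {n : nat} (M : 'M[R]_n) :
  sym_mx M -> sym_mx (- M).
Proof. by move=> /symE hM; apply/symE => i j; rewrite !mxE hM. Qed.
Lemma symZ {R : realType} {n : nat} (a : R) (M : 'M[R]_n) :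
  sym_mx M -> sym_mx (a *: M).
Proof. by move=> /symE hM; apply/symE => i j; rewrite !mxE hM. Qed.

Lemma sym_calAadj {R : realType} {n m : nat} (A : 'I_m -> 'M[R]_n) y :
  (forall i, sym_mx (A i)) -> sym_mx (calAadj A y).
Proof.
move=> sA; apply/symE => k l; rewrite /calAadj !summxE; apply: eq_bigr => i _.
by rewrite !mxE; have /symE -> := sA i.
Qed.

Lemma sym_step {R : realType} {n m : nat} (A : 'I_m -> 'M[R]_n) C b sigma Z :
  (forall i, sym_mx (A i)) -> sym_mx C -> sym_mx (admm_step A C b sigma Z).
Proof.
move=> sA sC.
have sP : forall W, sym_mx (projA A W) by move=> W; apply: sym_calAadj.
have sB : sym_mx (pinvA A b) by apply: sym_calAadj.
have sPr : sym_mx (psd_proj Z) by case: (psd_proj_spec Z) => [[]].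
rewrite /admm_step.
by repeat (apply: symD || apply: symN || apply: symZ) => //.
Qed.
Theorem proposition3 (R : realType) (n m : nat)
  (C : 'M[R]_n) (A : 'I_m -> 'M[R]_n) (b : 'cV[R]_m) (sigma : R)
  (Z : nat -> 'M[R]_n) (Xs : 'M[R]_n) (ys : 'cV[R]_m) (Ss : 'M[R]_n) :
  sym_mx C -> (forall i, sym_mx (A i)) ->
  (* calA : S^n -> R^m is surjective *)
  (forall c : 'cV[R]_m, exists X : 'M[R]_n, sym_mx X /\ calA A X = c) ->
  (* the KKT set is nonempty *)
  (exists X y S, KKT A C b X y S) ->
  0 < sigma ->
  sym_mx (Z 0%N) ->
  (forall k, Z k.+1 = admm_step A C b sigma (Z k)) ->
  KKT A C b Xs ys Ss ->
  Z @ \oo --> (Xs - sigma *: Ss) ->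
  (\rank Xs + \rank Ss = n)%N ->
  exists kID : nat, forall k : nat, (kID <= k)%N ->
    \rank (psd_proj (Z k)) = \rank Xs /\
    \rank (sigma^-1 *: psd_proj (- Z k)) = \rank Ss.
Proof.
move=> sC sA _ _ s0 sZ0 hstep [_ _ hXS pX pS] hcvg hrank.
set Zs := Xs - sigma *: Ss.
have sZ : forall k, sym_mx (Z k).
  by elim=> [|k IH] //; rewrite hstep; apply: sym_step.
have sX : sym_mx Xs by case: pX.
have sS : sym_mx Ss by case: pS.
have ipXS : frob_ip Xs Ss = 0 by rewrite /frob_ip (sX : Xs^T = Xs).
have ipSX : frob_ip Ss Xs = 0 by rewrite frob_ipC.
have VIX : VI Zs Xs.
  split => // Y Yp.
  have -> : Zs - Xs = - (sigma *: Ss) by apply/matrixP => i j; rewrite !mxE; ring.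
  rewrite frob_ipNl frob_ipZl frob_ipBr ipSX subr0.
  have := psd_ip_ge0 pS Yp; nra.
have pSs : psd_mx (sigma *: Ss) by apply: psd_scale => //; apply: ltW.
have VIS : VI (- Zs) (sigma *: Ss).
  split => // Y Yp.
  have -> : - Zs - sigma *: Ss = - Xs by apply/matrixP => i j; rewrite !mxE; ring.
  rewrite frob_ipNl frob_ipBr frob_ipZr ipXS mulr0 subr0.
  have := psd_ip_ge0 pX Yp; lra.
have [e1 e10 he1] := rank_lsc Xs.
have [e2 e20 he2] := rank_lsc (sigma *: Ss).
have [N1 hN1] := @cvg_frob _ _ Z _ hcvg e1 e10.
have [N2 hN2] := @cvg_frob _ _ Z _ hcvg e2 e20.
have sn0 : sigma != 0 by rewrite gt_eqF.
exists (maxn N1 N2) => k hk.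
have hk1 : (N1 <= k)%N by apply: leq_trans hk; apply: leq_maxl.
have hk2 : (N2 <= k)%N by apply: leq_trans hk; apply: leq_maxr.
set P := psd_proj (Z k); set Q := psd_proj (- Z k).
have VIP : VI (Z k) P := proj_VI (psd_proj_spec (Z k)).
have VIQ : VI (- Z k) Q := proj_VI (psd_proj_spec (- Z k)).
have r1 : (\rank Xs <= \rank P)%N.
  apply: he1; apply: le_lt_trans (VI_nonexp VIP VIX) _; exact: hN1.
have r2 : (\rank Ss <= \rank Q)%N.
  rewrite -(mxrank_scale_nz Ss sn0); apply: he2.
  apply: le_lt_trans (VI_nonexp VIQ VIS) _.
  have -> : - Z k - - Zs = - (Z k - Zs) by apply/matrixP => i j; rewrite !mxE; ring.
  rewrite frob_sqN; exact: hN2.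
have [VIPZ hPZ] := VI_moreau (sZ k) VIP.
have hQ : Q = P - Z k := VI_unique VIQ VIPZ.
have hPQ : P *m Q = 0.
  rewrite hQ; apply: psd_ip_eq0 => //; first by case: VIP.
  by case: VIPZ.
have r3 := mxrank_mul_min P Q.
rewrite hPQ mxrank0 in r3.
rewrite (mxrank_scale_nz _ (invr_neq0 sn0)).
have hPn : (\rank P + \rank Q <= n)%N by move: r3; rewrite leqn0 subn_eq0.
have hPn' : (\rank P + \rank Q <= \rank Xs + \rank Ss)%N by rewrite hrank.
move: r1 r2 hPn'; clear.
move: (\rank P) (\rank Q) (\rank Xs) (\rank Ss) => a b c d h1 h2 h3.
split; apply/eqP; rewrite eqn_leq.
  rewrite h1 andbT -(leq_add2r d); apply: leq_trans _ h3; rewrite leq_add2l //.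
rewrite h2 andbT -(leq_add2l c); apply: leq_trans _ h3; rewrite leq_add2r //.
Qed.
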